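(* Let $\phi\in\mathbf{FO}(\mathrm{NE},\sqcup)$. Then $\sim\phi$ is equivalent to some formula of $\mathbf{FO}(\mathrm{NE},\sqcup)$.
   Context: Team semantics (lax version). For a structure $\mathfrak M$ with domain $M$, a team $X$ is a (possibly empty) set of assignments $s:V\to M$, $V$ a finite set of variables. Satisfaction for formulas in negation normal form: first-order literal $\alpha$: every $s\in X$ satisfies $\alpha$ (Tarski); $\psi\vee\theta$: $X=Y\cup Z$ with $\mathfrak M\models_Y\psi$, $\mathfrak M\models_Z\theta$; $\psi\wedge\theta$: both; $\exists v\psi$: some $F:X\to\mathcal P(M)\setminus\{\emptyset\}$ with $\mathfrak M\models_{X[F/v]}\psi$, $X[F/v]=\{s[m/v]:s\in X,m\in F(s)\}$; $\forall v\psi$: $\mathfrak M\models_{X[M/v]}\psi$, $X[M/v]=\{s[m/v]:s\in X,m\in M\}$. $\mathfrak M\models_X\mathrm{NE}$ iff $X\ne\emptyset$; $\mathfrak M\models_X\phi\sqcup\psi$ iff $\mathfrak M\models_X\phi$ or $\mathfrak M\models_X\psi$; contradictory negation: $\mathfrak M\models_X\sim\phi$ iff $\mathfrak M\not\models_X\phi$. $\mathbf{FO}(\mathrm{NE},\sqcup)$ is first-order logic in negation normal form extended with $\mathrm{NE}$ and $\sqcup$. Two formulas are equivalent if satisfied by the same teams in all structures. *)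

(* Defs.v *)
(* Team semantics for FO(NE, sqcup), lax version.  Plain MathComp boot world. *)
From mathcomp Require Import all_boot.
Set Implicit Arguments. Unset Strict Implicit. Unset Printing Implicit Defensive.

Record signature := Signature {
  func : Type; farity : func -> nat;
  rel : Type; rarity : rel -> nat }.

Record structure (L : signature) := Structure {
  dom :> Type;
  dom_ne : inhabited dom;
  fint : forall f : func L, ('I_(farity f) -> dom) -> dom;
  rint : forall r : rel L, ('I_(rarity r) -> dom) -> Prop }.

Inductive term (L : signature) :=
  | Var of nat
  | App (f : func L) of ('I_(farity f) -> term L).

Inductive literal (L : signature) :=
  | LRel (r : rel L) of ('I_(rarity r) -> term L)
  | LNRel (r : rel L) of ('I_(rarity r) -> term L)
  | LEq of term L & term L
  | LNEq of term L & term L.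

Inductive formula (L : signature) :=
  | FLit of literal L
  | FAnd of formula L & formula L
  | FOr of formula L & formula L          (* tensor / split disjunction *)
  | FEx of nat & formula L
  | FAll of nat & formula L
  | FNE
  | FGor of formula L & formula L.        (* global disjunction  sqcup *)

Definition assignment (M : Type) := nat -> option M.
Definition team (M : Type) := assignment M -> Prop.
Definition is_team (M : Type) (V : seq nat) (X : team M) : Prop :=
  forall s, X s -> forall v, (s v <> None <-> v \in V).

Definition upd (M : Type) (s : assignment M) (v : nat) (m : M) : assignment M :=
  fun w => if w == v then Some m else s w.

Section Semantics.
Variables (L : signature) (M : structure L).

(* Term evaluation (relational; undefined if a variable is unassigned). *)
Inductive teval (s : assignment M) : term L -> M -> Prop :=
  | TEvar v m : s v = Some m -> teval s (Var L v) m
  | TEapp f (ts : 'I_(farity f) -> term L) (vs : 'I_(farity f) -> M) :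
      (forall i, teval s (ts i) (vs i)) -> teval s (App ts) (fint vs).

Definition lit_sat (s : assignment M) (l : literal L) : Prop :=
  match l with
  | LRel r ts => exists vs, (forall i, teval s (ts i) (vs i)) /\ rint vs
  | LNRel r ts => exists vs, (forall i, teval s (ts i) (vs i)) /\ ~ rint vs
  | LEq t1 t2 => exists a, teval s t1 a /\ teval s t2 a
  | LNEq t1 t2 => exists a b, teval s t1 a /\ teval s t2 b /\ a <> b
  end.

Definition supp_team (X : team M) (F : assignment M -> M -> Prop) (v : nat) : team M :=
  fun s' => exists s m, X s /\ F s m /\ s' = upd s v m.
Definition dup_team (X : team M) (v : nat) : team M :=
  fun s' => exists s m, X s /\ s' = upd s v m.

Fixpoint sat (X : team M) (phi : formula L) : Prop :=
  match phi with
  | FLit l => forall s, X s -> lit_sat s l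
  | FAnd a b => sat X a /\ sat X b
  | FOr a b => exists Y Z : team M,
      (forall s, X s <-> Y s \/ Z s) /\ sat Y a /\ sat Z b
  | FEx v a => exists F : assignment M -> M -> Prop,
      (forall s, X s -> exists m, F s m) /\ sat (supp_team X F v) a
  | FAll v a => sat (dup_team X v) a
  | FNE => exists s, X s
  | FGor a b => sat X a \/ sat X b
  end.

Definition sat_neg (X : team M) (phi : formula L) : Prop := ~ sat X phi.

End Semantics.

Fixpoint toccurs (L : signature) (v : nat) (t : term L) : Prop :=
  match t with
  | Var w => v = w
  | App f ts => exists i, toccurs v (ts i)
  end.

Definition loccurs (L : signature) (v : nat) (l : literal L) : Prop :=
  match l with
  | LRel r ts => exists i, toccurs v (ts i)
  | LNRel r ts => exists i, toccurs v (ts i)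
  | LEq t1 t2 => toccurs v t1 \/ toccurs v t2
  | LNEq t1 t2 => toccurs v t1 \/ toccurs v t2
  end.

Fixpoint free (L : signature) (v : nat) (phi : formula L) : Prop :=
  match phi with
  | FLit l => loccurs v l
  | FAnd a b | FOr a b | FGor a b => free v a \/ free v b
  | FEx w a | FAll w a => v <> w /\ free v a
  | FNE => False
  end.

(* Main.v *)
Require Import Defs.
From mathcomp Require Import all_boot.
From Stdlib Require Import Classical IndefiniteDescription FunctionalExtensionality.
Set Implicit Arguments. Unset Strict Implicit. Unset Printing Implicit Defensive.

Section Aux.
Variables (L : signature) (M : structure L).
Implicit Types (s : assignment M) (X Y : team M) (a b : formula L).

Lemma teval_inv s t m : teval s t m ->
  match t with
  | Var v => s v = Some m
  | App f ts => exists vs, (forall i, teval s (ts i) (vs i)) /\ m = fint vs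
  end.
Proof. case => [v m' H | f ts vs H]; [done | by exists vs]. Qed.

Lemma teval_det s t : forall m1 m2, teval s t m1 -> teval s t m2 -> m1 = m2.
Proof.
elim: t => [v | f ts IH] m1 m2 /teval_inv Ha /teval_inv Hb.
  by rewrite Ha in Hb; case: Hb.
case: Ha => vs [Hvs ->]; case: Hb => vs' [Hvs' ->].
have -> : vs = vs' by apply: functional_extensionality => i; exact: IH.
done.
Qed.

Lemma evals_ex s n (ts : 'I_n -> term L) :
  (forall i, exists m, teval s (ts i) m) ->
  exists vs : 'I_n -> M, forall i, teval s (ts i) (vs i).
Proof.
move=> H.
exists (fun i => proj1_sig (constructive_indefinite_description _ (H i))).
move=> i; exact: proj2_sig (constructive_indefinite_description _ (H i)).
Qed.

Lemma teval_total s t : (forall v, toccurs v t -> s v <> None) ->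
  exists m, teval s t m.
Proof.
elim: t => [v | f ts IH] H.
  case E: (s v) => [m|]; first by exists m; constructor.
  by exfalso; apply: (H v).
have [vs Hvs] : exists vs : 'I_(farity f) -> M, forall i, teval s (ts i) (vs i).
  apply: evals_ex => i; apply: IH => v Hv; apply: H; by exists i.
exists (fint vs); by constructor.
Qed.

Lemma evals_uniq s n (ts : 'I_n -> term L) (vs vs' : 'I_n -> M) :
  (forall i, teval s (ts i) (vs i)) -> (forall i, teval s (ts i) (vs' i)) -> vs = vs'.
Proof.
move=> H1 H2; apply: functional_extensionality => i; exact: teval_det (H1 i) (H2 i).
Qed.

Definition dual_lit (l : literal L) : literal L :=
  match l with
  | LRel r ts => LNRel ts
  | LNRel r ts => LRel ts
  | LEq t1 t2 => LNEq t1 t2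
  | LNEq t1 t2 => LEq t1 t2
  end.

Lemma lit_dual s l : (forall v, loccurs v l -> s v <> None) ->
  (lit_sat s (dual_lit l) <-> ~ lit_sat s l).
Proof.
case: l => [r ts | r ts | t1 t2 | t1 t2] /= Hc.
- have [vs0 H0] : exists vs : 'I_(rarity r) -> M, forall i, teval s (ts i) (vs i).
    apply: evals_ex => i; apply: teval_total => v Hv; apply: Hc; by exists i.
  split.
    move=> [vs [Hvs Hn]] [vs' [Hvs' Hr]]; apply: Hn; by rewrite (evals_uniq Hvs Hvs').
  move=> Hn; exists vs0; split => // Hr; apply: Hn; by exists vs0.
- have [vs0 H0] : exists vs : 'I_(rarity r) -> M, forall i, teval s (ts i) (vs i).
    apply: evals_ex => i; apply: teval_total => v Hv; apply: Hc; by exists i.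
  split.
    move=> [vs [Hvs Hr]] [vs' [Hvs' Hn]]; apply: Hn; by rewrite -(evals_uniq Hvs Hvs').
  move=> Hn; exists vs0; split => //; case: (classic (rint vs0)) => // Hr.
  exfalso; apply: Hn; by exists vs0.
- have [a1 H1] := teval_total (fun v Hv => Hc v (or_introl Hv)).
  have [a2 H2] := teval_total (fun v Hv => Hc v (or_intror Hv)).
  split.
    move=> [a [b [Ha [Hb Hab]]]] [c [Hc1 Hc2]]; apply: Hab.
    by rewrite (teval_det Ha Hc1) (teval_det Hb Hc2).
  move=> Hn; exists a1, a2; split => //; split => // E; apply: Hn; exists a1.
  by rewrite {2}E.
- have [a1 H1] := teval_total (fun v Hv => Hc v (or_introl Hv)).
  have [a2 H2] := teval_total (fun v Hv => Hc v (or_intror Hv)).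
  split.
    move=> [c [Hc1 Hc2]] [a [b [Ha [Hb Hab]]]]; apply: Hab.
    by rewrite (teval_det Ha Hc1) (teval_det Hb Hc2).
  move=> Hn; case: (classic (a1 = a2)) => [E|NE].
    by exists a1; rewrite {2}E.
  exfalso; apply: Hn; by exists a1, a2.
Qed.

Lemma sat_ext a : forall X Y, (forall s, X s <-> Y s) -> sat X a -> sat Y a.
Proof.
elim: a => [l|a IHa b IHb|a IHa b IHb|v a IH|v a IH| |a IHa b IHb] X Y E /=.
- move=> H s /E; exact: H.
- case=> Ha Hb; split; [exact: IHa E Ha | exact: IHb E Hb].
- case=> [Y1 [Z1 [HS [Ha Hb]]]]; exists Y1, Z1; split => // s.
  move: (E s) (HS s); tauto.
- case=> F [HF Ha]; exists F; split.
    move=> s /E; exact: HF.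
  apply: IH Ha => s'; rewrite /supp_team; firstorder.
- apply: IH => s'; rewrite /dup_team; firstorder.
- by case=> s /E; exists s.
- case=> H; [left; exact: IHa E H | right; exact: IHb E H].
Qed.

Definition tsat s a := sat (fun t => t = s) a.
Definition flat a := forall X, sat X a <-> forall s, X s -> tsat s a.

Lemma flat_lit l : flat (FLit l).
Proof.
move=> X /=; split.
  move=> H s Hs.
  rewrite /tsat /=.
  move=> t E.
  subst t.
  by apply: H.
move=> H s0 Hs.
exact: (H s0 Hs s0 erefl).
Qed.
Lemma flat_and a b : flat a -> flat b -> flat (FAnd a b).
Proof.
move=> Fa Fb X /=; rewrite /tsat /=; split.
  by case=> /Fa Ha /Fb Hb s Hs; split; [apply: Ha | apply: Hb].
move=> H; split; [apply/Fa | apply/Fb] => s /H []//.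
Qed.

Lemma tsat_or' a b s : flat a -> flat b -> (tsat s (FOr a b) <-> tsat s a \/ tsat s b).
Proof.
move=> Fa Fb; split.
  case=> Y [Z [HS [/Fa Ha /Fb Hb]]].
  by case: ((HS s).1 erefl) => H; [left; apply: Ha | right; apply: Hb].
case=> H.
  exists (fun t => t = s), (fun _ => False); split; first by move=> t; tauto.
  by split => //; apply/Fb.
exists (fun _ => False), (fun t => t = s); split; first by move=> t; tauto.
by split => //; apply/Fa.
Qed.

Lemma flat_or a b : flat a -> flat b -> flat (FOr a b).
Proof.
move=> Fa Fb X; split.
  case=> Y [Z [HS [/Fa Ha /Fb Hb]]] s /HS [] H; apply/tsat_or' => //.
    by left; apply: Ha.
  by right; apply: Hb.
move=> H; exists (fun s => X s /\ tsat s a), (fun s => X s /\ tsat s b); split.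
  move=> s; split; last by tauto.
  by move=> Hs; have /(tsat_or' s Fa Fb) := H s Hs; tauto.
by split; [apply/Fa => s [] | apply/Fb => s []].
Qed.

Lemma tsat_ex' a v s : flat a -> (tsat s (FEx v a) <-> exists m, tsat (upd s v m) a).
Proof.
move=> Fa; split.
  case=> F [HF /Fa Hsat]; case: (HF s erefl) => m Hm; exists m.
  apply: Hsat; by exists s, m.
case=> m Hm; exists (fun _ m' => m' = m); split; first by move=> t _; exists m.
by apply/Fa => s' [s0 [m0 [-> [-> ->]]]].
Qed.

Lemma flat_ex a v : flat a -> flat (FEx v a).
Proof.
move=> Fa X; split.
  case=> F [HF /Fa Hsat] s Hs; apply/tsat_ex' => //.
  case: (HF s Hs) => m Hm; exists m; apply: Hsat; by exists s, m.
move=> H; exists (fun s m => tsat (upd s v m) a); split.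
  by move=> s /H /tsat_ex' => /(_ Fa).
by apply/Fa => s' [s0 [m0 [_ [Hm ->]]]].
Qed.

Lemma tsat_all' a v s : flat a -> (tsat s (FAll v a) <-> forall m, tsat (upd s v m) a).
Proof.
move=> Fa; split.
  move=> /Fa Hsat m; apply: Hsat; by exists s, m.
by move=> H; apply/Fa => s' [s0 [m [-> ->]]].
Qed.

Lemma flat_all a v : flat a -> flat (FAll v a).
Proof.
move=> Fa X; split.
  move=> /Fa Hsat s Hs; apply/tsat_all' => // m; apply: Hsat; by exists s, m.
move=> H; apply/Fa => s' [s0 [m [Hs0 ->]]].
by have /tsat_all' := H s0 Hs0; apply.
Qed.

Fixpoint fo a : Prop :=
  match a with
  | FLit _ => True
  | FAnd a b | FOr a b => fo a /\ fo b
  | FEx _ a | FAll _ a => fo a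
  | FNE => False
  | FGor _ _ => False
  end.

Lemma fo_flat a : fo a -> flat a.
Proof.
elim: a => [l|a IHa b IHb|a IHa b IHb|v a IH|v a IH| |a IHa b IHb] //= .
- move=> _; exact: flat_lit.
- case=> /IHa Ha /IHb Hb; exact: flat_and.
- case=> /IHa Ha /IHb Hb; exact: flat_or.
- move=> /IH; exact: flat_ex.
- move=> /IH; exact: flat_all.
Qed.

Lemma tsat_or a b s : fo a -> fo b -> (tsat s (FOr a b) <-> tsat s a \/ tsat s b).
Proof. move=> /fo_flat ? /fo_flat ?; exact: tsat_or'. Qed.
Lemma tsat_ex a v s : fo a -> (tsat s (FEx v a) <-> exists m, tsat (upd s v m) a).
Proof. move=> /fo_flat ?; exact: tsat_ex'. Qed.
Lemma tsat_all a v s : fo a -> (tsat s (FAll v a) <-> forall m, tsat (upd s v m) a).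
Proof. move=> /fo_flat ?; exact: tsat_all'. Qed.

Fixpoint dual a : formula L :=
  match a with
  | FLit l => FLit (dual_lit l)
  | FAnd a b => FOr (dual a) (dual b)
  | FOr a b => FAnd (dual a) (dual b)
  | FEx v a => FAll v (dual a)
  | FAll v a => FEx v (dual a)
  | FNE => FNE L
  | FGor a b => FGor a b
  end.

Lemma fo_dual a : fo a -> fo (dual a).
Proof. by elim: a => //= [a IHa b IHb|a IHa b IHb] [/IHa ? /IHb ?]. Qed.

Definition covf s a := forall v, free v a -> s v <> None.

Lemma tsat_dual a : forall s, fo a -> covf s a -> (tsat s (dual a) <-> ~ tsat s a).
Proof.
elim: a => [l|a IHa b IHb|a IHa b IHb|v a IH|v a IH| |a IHa b IHb] //= s.
- move=> _ Hc; rewrite /tsat /=.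
  have H := lit_dual Hc; split.
    move=> H1 H2; exact: (H.1 (H1 s erefl) (H2 s erefl)).
  move=> H1 t E; subst t; apply/H => H2; apply: H1 => t' E'; subst t'; exact: H2.
- case=> Fa Fb Hc.
  have Ca : covf s a by move=> w Hw; apply: Hc => /=; tauto.
  have Cb : covf s b by move=> w Hw; apply: Hc => /=; tauto.
  rewrite tsat_or; try exact: fo_dual.
  rewrite (IHa s Fa Ca) (IHb s Fb Cb).
  rewrite /tsat /=; have := classic (tsat s a); rewrite /tsat; tauto.
- case=> Fa Fb Hc.
  have Ca : covf s a by move=> w Hw; apply: Hc => /=; tauto.
  have Cb : covf s b by move=> w Hw; apply: Hc => /=; tauto.
  rewrite tsat_or //.
  rewrite /tsat /= -/(tsat s (dual a)) -/(tsat s (dual b)).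
  rewrite (IHa s Fa Ca) (IHb s Fb Cb).
  tauto.
- move=> Fa Hc; rewrite tsat_all ?tsat_ex //; last exact: fo_dual.
  have Hc' m : covf (upd s v m) a.
    move=> w Hw; rewrite /upd; case: eqP => // /eqP Hwv; apply: Hc; split => //.
    by apply/eqP.
  split.
    move=> H [m Hm]; exact: (IH _ Fa (Hc' m)).1 (H m) Hm.
  move=> H m; apply/(IH _ Fa (Hc' m)) => Hm; apply: H; by exists m.
- move=> Fa Hc; rewrite tsat_all ?tsat_ex //; last exact: fo_dual.
  have Hc' m : covf (upd s v m) a.
    move=> w Hw; rewrite /upd; case: eqP => // /eqP Hwv; apply: Hc; split => //.
    by apply/eqP.
  split.
    move=> [m Hm] H; exact: (IH _ Fa (Hc' m)).1 Hm (H m).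
  move=> H; apply: NNPP => Hn; apply: H => m; apply: NNPP => Hm.
  apply: Hn; exists m; exact/(IH _ Fa (Hc' m)).
Qed.


Definition top : formula L := FAll 0 (FLit (LEq (Var L 0) (Var L 0))).
Definition bot : formula L := FAnd (FNE L) (FAll 0 (FLit (LNEq (Var L 0) (Var L 0)))).

Lemma fo_top : fo top. Proof. by []. Qed.

Lemma tsat_top s : tsat s top.
Proof.
apply/tsat_all => // m; rewrite /tsat /= => t E; subst t.
by exists m; split; constructor; rewrite /upd eqxx.
Qed.

Lemma sat_top X : sat X top.
Proof. apply/(fo_flat fo_top X) => s _; exact: tsat_top. Qed.

Lemma sat_bot X : ~ sat X bot.
Proof.
case=> [[s Hs] H]; case: (dom_ne M) => m.
have := H (upd s 0 m); case; first by exists s, m.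
move=> a [b [Ha [Hb Hab]]]; apply: Hab; exact: teval_det Ha Hb.
Qed.

Fixpoint lin {A : Type} (x : A) (l : list A) : Prop :=
  match l with [::] => False | y :: l => y = x \/ lin x l end.

Lemma lin_cat A (x : A) l1 l2 : lin x (l1 ++ l2) <-> lin x l1 \/ lin x l2.
Proof. elim: l1 => /= [|y l1 IH]; [tauto | rewrite IH; tauto]. Qed.

Lemma lin_map A B (f : A -> B) x l : lin x (map f l) <-> exists y, lin y l /\ x = f y.
Proof.
elim: l => /= [|y l IH]; first by split => // [[y []]].
rewrite IH; split.
  case=> [<-|[z [Hz ->]]]; [exists y; tauto | exists z; tauto].
case=> z [[<-|Hz] ->]; [by left | right; by exists z].
Qed.

Definition clause := (formula L * list (formula L))%type.

Fixpoint prodN (f : clause -> clause -> clause) (N1 N2 : list clause) : list clause :=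
  match N1 with [::] => [::] | p :: N1 => map (f p) N2 ++ prodN f N1 N2 end.

Lemma lin_prod f x N1 N2 :
  lin x (prodN f N1 N2) <-> exists p q, lin p N1 /\ lin q N2 /\ x = f p q.
Proof.
elim: N1 => /= [|p N1 IH]; first by split => //; case=> p [q []].
rewrite lin_cat lin_map IH; split.
  case=> [[q [Hq ->]]|[p' [q [H1 [H2 ->]]]]]; [exists p, q; tauto | exists p', q; tauto].
case=> p' [q [[<-|H1] [H2 ->]]]; [left; exists q; tauto | right; exists p', q; tauto].
Qed.

Definition csat X (p : clause) :=
  (forall s, X s -> tsat s p.1) /\ (forall b, lin b p.2 -> exists s, X s /\ tsat s b).
Definition nfsat X (N : list clause) := exists p, lin p N /\ csat X p.
Definition okc (P : formula L -> Prop) (p : clause) := P p.1 /\ forall b, lin b p.2 -> P b.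
Definition okN (P : formula L -> Prop) (N : list clause) := forall p, lin p N -> okc P p.

Lemma tsat_andE s a b : tsat s (FAnd a b) <-> tsat s a /\ tsat s b.
Proof. by []. Qed.

Definition and_c (p q : clause) : clause := (FAnd p.1 q.1, p.2 ++ q.2).

Lemma csat_and X p q : csat X (and_c p q) <-> csat X p /\ csat X q.
Proof.
rewrite /csat /=; split.
  case=> H1 H2; split; split.
  - by move=> s /H1 /tsat_andE [].
  - move=> b Hb; apply: H2; apply/lin_cat; tauto.
  - by move=> s /H1 /tsat_andE [].
  - move=> b Hb; apply: H2; apply/lin_cat; tauto.
case=> [[A1 B1] [A2 B2]]; split.
  move=> s Hs; apply/tsat_andE; split; [exact: A1 | exact: A2].
by move=> b /lin_cat [] Hb; [apply: B1 | apply: B2].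
Qed.

Lemma nfsat_and X N1 N2 : nfsat X (prodN and_c N1 N2) <-> nfsat X N1 /\ nfsat X N2.
Proof.
rewrite /nfsat; split.
  case=> x [/lin_prod [p [q [Hp [Hq ->]]]] /csat_and [Hp' Hq']].
  split; [exists p | exists q]; tauto.
case=> [[p [Hp Hp']] [q [Hq Hq']]]; exists (and_c p q); split.
  apply/lin_prod; exists p, q; tauto.
by apply/csat_and.
Qed.

Definition or_c (p q : clause) : clause :=
  (FOr p.1 q.1, map (FAnd p.1) p.2 ++ map (FAnd q.1) q.2).

Lemma csat_or X p q (Fp : fo p.1) (Fq : fo q.1) :
  csat X (or_c p q) <->
  exists Y Z, (forall s, X s <-> Y s \/ Z s) /\ csat Y p /\ csat Z q.
Proof.
split.
  case=> H1 H2.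
  exists (fun s => X s /\ tsat s p.1), (fun s => X s /\ tsat s q.1); split.
    move=> s; split; last tauto.
    move=> Hs; have := (tsat_or s Fp Fq).1 (H1 s Hs); tauto.
  split; split.
  - by move=> s [].
  - move=> b Hb.
    have [s [Hs /tsat_andE [Hs1 Hs2]]] : exists s, X s /\ tsat s (FAnd p.1 b).
      apply: H2; apply/lin_cat; left; apply/lin_map; by exists b.
    exists s; tauto.
  - by move=> s [].
  - move=> b Hb.
    have [s [Hs /tsat_andE [Hs1 Hs2]]] : exists s, X s /\ tsat s (FAnd q.1 b).
      apply: H2; apply/lin_cat; right; apply/lin_map; by exists b.
    exists s; tauto.
case=> Y [Z [HS [[Y1 Y2] [Z1 Z2]]]]; split.
  move=> s /HS [] H; apply/(tsat_or s Fp Fq); [left; exact: Y1 | right; exact: Z1].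
move=> b /lin_cat [] /lin_map [b' [Hb' ->]].
  case: (Y2 b' Hb') => s [Hs Hb'']; exists s; split; first by apply/HS; left.
  apply/tsat_andE; split => //; exact: Y1.
case: (Z2 b' Hb') => s [Hs Hb'']; exists s; split; first by apply/HS; right.
apply/tsat_andE; split => //; exact: Z1.
Qed.

Definition ex_c v (p : clause) : clause :=
  (FEx v p.1, map (fun b => FEx v (FAnd p.1 b)) p.2).

Lemma csat_ex X v p (Fp : okc fo p) :
  csat X (ex_c v p) <->
  exists F, (forall s, X s -> exists m, F s m) /\ csat (supp_team X F v) p.
Proof.
case: Fp => F1 F2; split.
  case=> H1 H2; exists (fun s m => tsat (upd s v m) p.1); split.
    by move=> s /H1 /(tsat_ex _ _ F1).
  split.
    by move=> s' [s [m [Hs [Hm ->]]]].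
  move=> b Hb.
  have [s [Hs H]] := H2 (FEx v (FAnd p.1 b)) (proj2 (lin_map _ _ _) (ex_intro _ b (conj Hb erefl))).
  have [m /tsat_andE [Hm1 Hm2]] := (tsat_ex (a:=FAnd p.1 b) _ _ (conj F1 (F2 b Hb))).1 H.
  exists (upd s v m); split => //; exists s, m; tauto.
case=> F [HF [H1 H2]]; split.
  move=> s Hs; apply/(tsat_ex _ _ F1); case: (HF s Hs) => m Hm; exists m.
  apply: H1; exists s, m; tauto.
move=> c /lin_map [b [Hb ->]].
case: (H2 b Hb) => s' [[s [m [Hs [Hm ->]]]] Hb'].
exists s; split => //; apply/(tsat_ex (a:=FAnd p.1 b) _ _ (conj F1 (F2 b Hb))).
exists m; apply/tsat_andE; split => //; apply: H1; exists s, m; tauto.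
Qed.

Definition all_c v (p : clause) : clause := (FAll v p.1, map (FEx v) p.2).

Lemma csat_all X v p (Fp : okc fo p) :
  csat X (all_c v p) <-> csat (dup_team X v) p.
Proof.
case: Fp => F1 F2; split.
  case=> H1 H2; split.
    move=> s' [s [m [Hs ->]]]; exact: (tsat_all _ _ F1).1 (H1 s Hs) m.
  move=> b Hb.
  have [s [Hs H]] := H2 (FEx v b) (proj2 (lin_map _ _ _) (ex_intro _ b (conj Hb erefl))).
  have [m Hm] := (tsat_ex _ _ (F2 b Hb)).1 H.
  exists (upd s v m); split => //; exists s, m; tauto.
case=> H1 H2; split.
  move=> s Hs; apply/(tsat_all _ _ F1) => m; apply: H1; exists s, m; tauto.
move=> c /lin_map [b [Hb ->]].
case: (H2 b Hb) => s' [[s [m [Hs ->]]] Hb'].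
exists s; split => //; apply/(tsat_ex _ _ (F2 b Hb)); by exists m.
Qed.

Fixpoint nf (phi : formula L) : list clause :=
  match phi with
  | FLit l => [:: (FLit l, [::])]
  | FAnd a b => prodN and_c (nf a) (nf b)
  | FOr a b => prodN or_c (nf a) (nf b)
  | FEx v a => map (ex_c v) (nf a)
  | FAll v a => map (all_c v) (nf a)
  | FNE => [:: (top, [:: top])]
  | FGor a b => nf a ++ nf b
  end.

Lemma nf_fo phi : okN fo (nf phi).
Proof.
elim: phi => [l|a IHa b0 IHb|a IHa b0 IHb|v a IH|v a IH| |a IHa b0 IHb] /= p.
- case=> [<-|[]]; split => // b [].
- move/lin_prod=> [p1 [q [H1 [H2 ->]]]].
  case: (IHa p1 H1) => A1 B1; case: (IHb q H2) => A2 B2.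
  split; first by split.
  by move=> c /lin_cat [] Hc; [apply: B1 | apply: B2].
- move/lin_prod=> [p1 [q [H1 [H2 ->]]]].
  case: (IHa p1 H1) => A1 B1; case: (IHb q H2) => A2 B2.
  split; first by split.
  move=> c /lin_cat [] /lin_map [b [Hb ->]] /=; split => //; [exact: B1 | exact: B2].
- move/lin_map=> [q [Hq ->]]; case: (IH q Hq) => A B.
  split => // c /lin_map [b [Hb ->]] /=; split => //; exact: B.
- move/lin_map=> [q [Hq ->]]; case: (IH q Hq) => A B.
  split => // c /lin_map [b [Hb ->]] /=; exact: B.
- case=> [<-|[]]; split => //= b [<-|[]] //.
- by move/lin_cat => [] Hp; [apply: IHa | apply: IHb].
Qed.

Lemma nf_free phi : okN (fun a => forall v, free v a -> free v phi) (nf phi).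
Proof.
elim: phi => [l|a IHa b0 IHb|a IHa b0 IHb|v a IH|v a IH| |a IHa b0 IHb] /= p.
- case=> [<-|[]]; split => // b [].
- move/lin_prod=> [p1 [q [H1 [H2 ->]]]].
  case: (IHa p1 H1) => A1 B1; case: (IHb q H2) => A2 B2.
  split; first by move=> w /= [/A1|/A2]; tauto.
  move=> b /lin_cat [] Hb w Hw; [left; exact: B1 Hb w Hw | right; exact: B2 Hb w Hw].
- move=> /lin_prod [p1 [q [H1 [H2 ->]]]].
  case: (IHa p1 H1) => A1 B1; case: (IHb q H2) => A2 B2.
  split; first by move=> w /= [/A1|/A2]; tauto.
  move=> c /lin_cat [] /lin_map [b [Hb ->]] w /= [Hw|Hw].
  + left; exact: A1.
  + left; exact: B1 Hb w Hw.
  + right; exact: A2.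
  + right; exact: B2 Hb w Hw.
- move/lin_map=> [q [Hq ->]]; case: (IH q Hq) => A B.
  split; first by move=> w /= [Hw /A].
  move=> c /lin_map [b [Hb ->]] w /= [Hw [/A|/(B b Hb)]] //.
- move/lin_map=> [q [Hq ->]]; case: (IH q Hq) => A B.
  split; first by move=> w /= [Hw /A].
  move=> c /lin_map [b [Hb ->]] w /= [Hw /(B b Hb)] //.
- case=> [<-|[]]; split; first by move=> w /= [H []].
  by move=> b [<-|[]] w /= [H []].
- move/lin_cat => [] Hp.
    case: (IHa p Hp) => A B; split; first by move=> w /A; tauto.
    by move=> b Hb w /(B b Hb); tauto.
  case: (IHb p Hp) => A B; split; first by move=> w /A; tauto.
  by move=> b Hb w /(B b Hb); tauto.
Qed.

Lemma nf_sat phi : forall X, sat X phi <-> nfsat X (nf phi).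
Proof.
elim: phi => [l|a IHa b IHb|a IHa b IHb|v a IH|v a IH| |a IHa b IHb] X /=.
- rewrite /nfsat; split.
    move=> H; exists (FLit l, [::]); split; first by left.
    split => //= s Hs t E; subst t; exact: H.
  case=> p [[<-|[]] [H1 _]] s Hs; exact: (H1 s Hs s erefl).
- split.
    by case=> /IHa Ha /IHb Hb; apply/nfsat_and.
  by move/nfsat_and => [/IHa Ha /IHb Hb].
- split.
    case=> Y [Z [HS [/IHa [p [Hp Hp']] /IHb [q [Hq Hq']]]]].
    exists (or_c p q); split.
      apply/lin_prod; exists p, q; tauto.
    apply/(csat_or _ (nf_fo Hp).1 (nf_fo Hq).1); exists Y, Z; tauto.
  case=> x [/lin_prod [p [q [Hp [Hq ->]]]]].
  move=> /(csat_or _ (nf_fo Hp).1 (nf_fo Hq).1) [Y [Z [HS [Yp Zq]]]].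
  exists Y, Z; split => //; split; [apply/IHa; exists p | apply/IHb; exists q]; tauto.
- split.
    case=> F [HF /IH [p [Hp Hp']]]; exists (ex_c v p); split.
      apply/lin_map; by exists p.
    apply/(csat_ex _ _ (nf_fo Hp)); exists F; tauto.
  case=> x [/lin_map [p [Hp ->]]] /(csat_ex _ _ (nf_fo Hp)) [F [HF Hc]].
  exists F; split => //; apply/IH; exists p; tauto.
- split.
    move/IH=> [p [Hp Hc]]; exists (all_c v p); split.
      apply/lin_map; by exists p.
    exact/(csat_all _ _ (nf_fo Hp)).
  case=> x [/lin_map [p [Hp ->]]] /(csat_all _ _ (nf_fo Hp)) Hc.
  apply/IH; exists p; tauto.
- split.
    case=> s Hs; exists (top, [:: top]); split; first by left.
    split => /= [t _|b [<-|[]]]; first exact: tsat_top.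
    exists s; split => //; exact: tsat_top.
  case=> p [[<-|[]] [_ H2]]; case: (H2 top (or_introl erefl)) => s [Hs _]; by exists s.
- split.
    case=> [/IHa|/IHb] [p [Hp Hc]]; exists p; split => //; apply/lin_cat; tauto.
  case=> p [/lin_cat [] Hp Hc]; [left; apply/IHa | right; apply/IHb]; exists p; tauto.
Qed.

Definition negc (p : clause) : list clause :=
  (top, [:: dual p.1]) :: map (fun b => (dual b, [::])) p.2.

Fixpoint negN (N : list clause) : list clause :=
  match N with
  | [::] => [:: (top, [::])]
  | p :: N => prodN and_c (negc p) (negN N)
  end.

Lemma negc_sat X p : okc fo p -> okc (fun a => forall s, X s -> covf s a) p ->
  (~ csat X p <-> nfsat X (negc p)).
Proof.
case=> F1 F2 [C1 C2]; split.
  move=> Hn; case: (classic (forall s, X s -> tsat s p.1)) => H1.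
    have : ~ (forall b, lin b p.2 -> exists s, X s /\ tsat s b).
      by move=> H2; apply: Hn; split.
    move=> /not_all_ex_not [b Hb'].
    have [Hb Hne] := imply_to_and _ _ Hb'.
    exists (dual b, [::]); split.
      right; apply/lin_map; by exists b.
    split => //= s Hs; apply/(tsat_dual (F2 b Hb) (C2 b Hb s Hs)) => Hsb.
    apply: Hne; by exists s.
  case: (not_all_ex_not _ _ H1) => s Hs'.
  have [Hs Hns] := imply_to_and _ _ Hs'.
  exists (top, [:: dual p.1]); split; first by left.
  split => /= [t _|c [<-|[]]]; first exact: tsat_top.
  exists s; split => //; exact/(tsat_dual F1 (C1 s Hs)).
case=> x [[<-|/lin_map [b [Hb ->]]] [H1 H2]] [K1 K2].
  case: (H2 (dual p.1) (or_introl erefl)) => s [Hs Hd].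
  exact: (tsat_dual F1 (C1 s Hs)).1 Hd (K1 s Hs).
case: (K2 b Hb) => s [Hs Hsb].
exact: (tsat_dual (F2 b Hb) (C2 b Hb s Hs)).1 (H1 s Hs) Hsb.
Qed.

Lemma negN_sat X N : okN fo N -> okN (fun a => forall s, X s -> covf s a) N ->
  (~ nfsat X N <-> nfsat X (negN N)).
Proof.
elim: N => [|p N IH] HF HC.
  split; last by move=> _ [p []].
  move=> _; exists (top, [::]); split; first by left.
  split => //= s _; exact: tsat_top.
have -> : negN (p :: N) = prodN and_c (negc p) (negN N) by [].
have Hp : okc fo p := HF p (or_introl erefl).
have HCp := HC p (or_introl erefl).
have HF' : okN fo N := fun q Hq => HF q (or_intror Hq).
have HC' : okN (fun a => forall s, X s -> covf s a) N := fun q Hq => HC q (or_intror Hq).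
split.
  move=> Hn; apply/nfsat_and; split.
    apply/(negc_sat Hp HCp) => Hc; apply: Hn; exists p; split => //; by left.
  apply/(IH HF' HC') => [[q [Hq Hc]]]; apply: Hn; exists q; split => //; by right.
move=> /nfsat_and [H1 H2] [q [[<-|Hq] Hc]].
  exact: (negc_sat Hp HCp).2 H1 Hc.
apply: ((IH HF' HC').2 H2); exists q; tauto.
Qed.

Lemma negN_fo N : okN fo N -> okN fo (negN N).
Proof.
elim: N => [|p N IH] HF q.
  case=> [<-|[]]; split => // b [].
have -> : negN (p :: N) = prodN and_c (negc p) (negN N) by [].
move/lin_prod => [p1 [q1 [H1 [H2 ->]]]].
have [A2 B2] := IH (fun r Hr => HF r (or_intror Hr)) q1 H2.
have [F1 F2] := HF p (or_introl erefl).
have [A1 B1] : okc fo p1.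
  case: H1 => [<-|/lin_map [b [Hb ->]]].
    split => //= c [<-|[]]; exact: fo_dual.
  split => //=; first (apply: fo_dual; exact: F2).
split; first by rewrite /=; split.
by move=> b /lin_cat [] Hb; [apply: B1 | apply: B2].
Qed.

Fixpoint ef (bs : list (formula L)) : formula L :=
  match bs with
  | [::] => top
  | b :: bs => FAnd (FOr (FAnd b (FNE L)) top) (ef bs)
  end.
Definition cf (p : clause) : formula L := FAnd p.1 (ef p.2).
Fixpoint tf (N : list clause) : formula L :=
  match N with [::] => bot | p :: N => FGor (cf p) (tf N) end.

Lemma sat_E X b : fo b -> (sat X (FOr (FAnd b (FNE L)) top) <-> exists s, X s /\ tsat s b).
Proof.
move=> Fb; split.
  case=> Y [Z [HS [[Yb [s Hs]] _]]]; exists s; split.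
    by apply/HS; left.
  exact: (fo_flat Fb Y).1 Yb s Hs.
case=> s [Hs Hb]; exists (fun t => t = s), X; split.
  move=> t; split; first by right.
  by case=> [E|//]; subst t.
split; [split; [exact: Hb | by exists s] | exact: sat_top].
Qed.

Lemma sat_ef X bs : (forall b, lin b bs -> fo b) ->
  (sat X (ef bs) <-> forall b, lin b bs -> exists s, X s /\ tsat s b).
Proof.
elim: bs => [|b bs IH] /= Hf.
  split => _; [by move=> b [] | exact: sat_top].
have IH' := IH (fun c Hc => Hf c (or_intror Hc)).
have Fb := Hf b (or_introl erefl).
split.
  case=> /(sat_E _ Fb) H1 /IH' H2 c [<-|Hc] //; exact: H2.
move=> H; split.
  apply/(sat_E _ Fb); apply: H; by left.
apply/IH' => c Hc; apply: H; by right.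
Qed.

Lemma sat_cf X p : okc fo p -> (sat X (cf p) <-> csat X p).
Proof.
case=> F1 F2; split.
  by case=> /(fo_flat F1 X) H1 /(sat_ef _ F2) H2; split.
case=> H1 H2; split; [exact/(fo_flat F1 X) | exact/(sat_ef _ F2)].
Qed.

Lemma sat_tf X N : okN fo N -> (sat X (tf N) <-> nfsat X N).
Proof.
elim: N => [|p N IH] /= HF.
  split; [move=> H; case: (sat_bot H) | by case=> p [[]]].
have Hp : okc fo p := HF p (or_introl erefl).
have HF' : okN fo N := fun q Hq => HF q (or_intror Hq).
split.
  case=> [/(sat_cf _ Hp) H | /(IH HF') [q [Hq Hc]]].
    exists p; split => //; by left.
  exists q; split => //; by right.
case=> q [[<-|Hq] Hc]; [left; exact/(sat_cf _ Hp) | right; apply/(IH HF'); by exists q].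
Qed.

End Aux.


Theorem mainTheorem6 (L : signature) (phi : formula L) :
  exists psi : formula L,
    forall (M : structure L) (V : seq nat) (X : team M),
      is_team V X ->
      (forall v, free v phi \/ free v psi -> v \in V) ->
      (sat_neg X phi <-> sat X psi).
Proof.
exists (tf (negN (nf phi))) => M V X HX Hfree.
have HC : okN (fun a => forall s, X s -> covf s a) (nf phi).
  move=> p Hp; have [A B] := nf_free Hp; split.
    move=> s Hs v Hv; exact: (HX s Hs v).2 (Hfree v (or_introl (A v Hv))).
  move=> b Hb s Hs v Hv; exact: (HX s Hs v).2 (Hfree v (or_introl (B b Hb v Hv))).
have HF := @nf_fo L phi.
rewrite /sat_neg; split.
  move=> Hn; apply/(sat_tf X (negN_fo HF)); apply/(negN_sat HF HC) => H.
  by apply: Hn; apply/nf_sat.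
move=> /(sat_tf X (negN_fo HF)) /(negN_sat HF HC) H1 H2; apply: H1; exact/nf_sat.
Qed.
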